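(* Fix real numbers $a,c$ with $c\neq a$, $K_W>0$ and $\kappa\in(0,\infty)$. Consider the additive Gaussian noise channel $Y_t=X_t+V_t$, $t=1,2,\dots$, driven by the ARMA$(a,c)$ noise $S_{t+1}=cS_t+W_t$, $V_t=(c-a)S_t+W_t$, $S_1=s$, with $W_t\sim N(0,K_W)$ mutually independent and independent of the initial state, and take the nonfeedback input $X_t=Z_t$ with $Z_t\sim N(0,\kappa)$ i.i.d. and independent of the noise (i.e. the time-invariant strategy with $\Lambda=0$, $K_Z=\kappa$). Then for $\Lambda=0$, $K_Z=\kappa$ the pair $\{A,C\}$ is detectable and $\{A^*,B^{*,1/2}\}$ is stabilizable, the algebraic Riccati equation $$K=c^2K+K_W-\frac{\big(K_W+cK(c-a)\big)^2}{\kappa+K_W+(c-a)^2K}$$ has the unique nonnegative stabilizing solution $$K^\infty=\frac{-h+\sqrt{h^2+4(c-a)^2K_W\kappa}}{2(c-a)^2}\ge0,\qquad h=\kappa(1-c^2)+K_W(1-a^2),$$ and, for every $s$, the rate $\lim_{n\to\infty}\frac1{2n}\sum_{t=1}^n\log\Big(\frac{(c-a)^2K^o_t+\kappa+K_W}{K_W}\Big)$ (with $K^o_t$ the solution of the difference Riccati equation below) equals $$C^{\infty,nfb}_{LB}(\kappa)=\frac12\log\Big(\frac{(c-a)^2K^\infty+\kappa+K_W}{K_W}\Big),$$ which is an achievable lower bound on the nonfeedback capacity, for all $\kappa\in(0,\infty)$.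
   Context: $K^o_t=\mathbf E\{(S_t-\mathbf E\{S_t\mid Y^{t-1},S_1=s\})^2\mid S_1=s\}$ satisfies $K^o_{t+1}=c^2K^o_t+K_W-\frac{(K_W+cK^o_t(c-a))^2}{\kappa+K_W+(c-a)^2K^o_t}$, $K^o_1=0$, and the displayed rate equals $\lim_n\frac1n[H(Y^n\mid S_1=s)-H(V^n\mid S_1=s)]$ (differential entropies). Notation: $A=c$, $C=\Lambda+c-a$, $R=K_Z+K_W$, $A^*=c-K_WR^{-1}C$, $B=1-K_W(K_Z+K_W)^{-1}$, $B^{*,1/2}=K_W^{1/2}B^{1/2}$; $\{A,C\}$ is detectable if there is $G\in\mathbb R$ with $|A-GC|<1$; $\{A^*,B^{*,1/2}\}$ is stabilizable if there is $G\in\mathbb R$ with $|A^*-B^{*,1/2}G|<1$. A solution $K\ge0$ of the Riccati equation is stabilizing if $|c-M(c-a)|<1$, where $M=\frac{K_W+cK(c-a)}{\kappa+K_W+(c-a)^2K}$. *)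

(* Defs.v *)
From Stdlib Require Import Reals Lra.
From Coquelicot Require Import Coquelicot.
Open Scope R_scope.

Fixpoint sumlt (f : nat -> R) (n : nat) : R :=
  match n with O => 0 | S m => sumlt f m + f m end.

Definition matA (c : R) : R := c.
Definition matC (Lambda c a : R) : R := Lambda + c - a.
Definition matR (KZ KW : R) : R := KZ + KW.
Definition matAstar (Lambda c a KZ KW : R) : R :=
  c - KW * / matR KZ KW * matC Lambda c a.
Definition matB (KZ KW : R) : R := 1 - KW * / (KZ + KW).
Definition matBstar_half (KZ KW : R) : R := sqrt KW * sqrt (matB KZ KW).

Definition detectable (A C : R) : Prop := exists G : R, Rabs (A - G * C) < 1.
Definition stabilizable (A Bh : R) : Prop := exists G : R, Rabs (A - Bh * G) < 1.

Definition riccati (a c KW kappa K : R) : R :=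
  c ^ 2 * K + KW - (KW + c * K * (c - a)) ^ 2 / (kappa + KW + (c - a) ^ 2 * K).

Definition gainM (a c KW kappa K : R) : R :=
  (KW + c * K * (c - a)) / (kappa + KW + (c - a) ^ 2 * K).

Definition stabilizing (a c KW kappa K : R) : Prop :=
  Rabs (c - gainM a c KW kappa K * (c - a)) < 1.

(* Ko a c KW kappa i = K^o_{i+1}: K^o_1 = 0, K^o_{t+1} = riccati (K^o_t). *)
Fixpoint Ko (a c KW kappa : R) (i : nat) : R :=
  match i with
  | O => 0
  | S j => riccati a c KW kappa (Ko a c KW kappa j)
  end.

Definition rate_n (a c KW kappa : R) (n : nat) : R :=
  / (2 * INR n) *
  sumlt (fun i => ln (((c - a) ^ 2 * Ko a c KW kappa i + kappa + KW) / KW)) n.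

Definition hh (a c KW kappa : R) : R := kappa * (1 - c ^ 2) + KW * (1 - a ^ 2).

Definition Kinf (a c KW kappa : R) : R :=
  (- hh a c KW kappa + sqrt (hh a c KW kappa ^ 2 + 4 * (c - a) ^ 2 * KW * kappa))
  / (2 * (c - a) ^ 2).

Definition C_LB_nfb (a c KW kappa : R) : R :=
  / 2 * ln (((c - a) ^ 2 * Kinf a c KW kappa + kappa + KW) / KW).

(* Main.v *)
Require Import Defs.
From Stdlib Require Import Reals Lra Psatz.
From Coquelicot Require Import Coquelicot.
Open Scope R_scope.

Lemma den_pos (a c KW kappa K : R) : 0 < KW -> 0 < kappa -> 0 <= K ->
  0 < kappa + KW + (c - a) ^ 2 * K.
Proof. intros. assert (0 <= (c-a)^2 * K) by (apply Rmult_le_pos; [apply pow2_ge_0|lra]). lra. Qed.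

Definition gfun (a c KW kappa M K : R) :=
  (c - M * (c - a)) ^ 2 * K + M ^ 2 * kappa + (1 - M) ^ 2 * KW.

Lemma g_id (a c KW kappa M K : R) : 0 < KW -> 0 < kappa -> 0 <= K ->
  gfun a c KW kappa M K = riccati a c KW kappa K +
   (kappa + KW + (c - a) ^ 2 * K) * (M - gainM a c KW kappa K) ^ 2.
Proof.
  intros. pose proof (den_pos a c KW kappa K H H0 H1).
  unfold gfun, riccati, gainM. field. lra.
Qed.

Lemma g_ge (a c KW kappa M K : R) : 0 < KW -> 0 < kappa -> 0 <= K ->
  riccati a c KW kappa K <= gfun a c KW kappa M K.
Proof.
  intros. rewrite (g_id a c KW kappa M K) by auto.
  pose proof (den_pos a c KW kappa K H H0 H1).
  assert (0 <= (kappa + KW + (c - a) ^ 2 * K) * (M - gainM a c KW kappa K) ^ 2).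
  { apply Rmult_le_pos; [lra|apply pow2_ge_0]. } lra.
Qed.

Lemma f_fix_g (a c KW kappa K : R) : 0 < KW -> 0 < kappa -> 0 <= K ->
  riccati a c KW kappa K = gfun a c KW kappa (gainM a c KW kappa K) K.
Proof. intros. rewrite g_id by auto. ring. Qed.

Lemma f_nonneg (a c KW kappa K : R) : 0 < KW -> 0 < kappa -> 0 <= K ->
  0 <= riccati a c KW kappa K.
Proof.
  intros. rewrite f_fix_g by auto. unfold gfun.
  set (M := gainM a c KW kappa K).
  assert (0 <= (c - M * (c - a)) ^ 2 * K) by (apply Rmult_le_pos; [apply pow2_ge_0|lra]).
  pose proof (pow2_ge_0 M); pose proof (pow2_ge_0 (1 - M)).
  assert (0 <= M ^ 2 * kappa) by (apply Rmult_le_pos; lra).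
  assert (0 <= (1 - M) ^ 2 * KW) by (apply Rmult_le_pos; lra).
  lra.
Qed.

Lemma f_mono (a c KW kappa x y : R) : 0 < KW -> 0 < kappa -> 0 <= x -> x <= y ->
  riccati a c KW kappa x <= riccati a c KW kappa y.
Proof.
  intros. rewrite (f_fix_g a c KW kappa y) by lra.
  apply Rle_trans with (gfun a c KW kappa (gainM a c KW kappa y) x).
  - apply g_ge; auto.
  - unfold gfun. set (M := gainM a c KW kappa y).
    assert (0 <= (c - M * (c - a)) ^ 2 * (y - x)) by (apply Rmult_le_pos; [apply pow2_ge_0|lra]).
    nra.
Qed.

Lemma f_quad (a c KW kappa K : R) : 0 < KW -> 0 < kappa -> 0 <= K ->
  (riccati a c KW kappa K - K) * (kappa + KW + (c - a) ^ 2 * K) =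
  - ((c - a) ^ 2 * K ^ 2 + hh a c KW kappa * K - KW * kappa).
Proof.
  intros. pose proof (den_pos a c KW kappa K H H0 H1).
  unfold riccati, hh. field. lra.
Qed.

Section S.
End S.

Lemma sqrt_facts (a c KW kappa : R) : c <> a -> 0 < KW -> 0 < kappa ->
  let s := sqrt (hh a c KW kappa ^ 2 + 4 * (c - a) ^ 2 * KW * kappa) in
  0 <= s /\ s * s = hh a c KW kappa ^ 2 + 4 * (c - a) ^ 2 * KW * kappa /\
  s > hh a c KW kappa /\ s > - hh a c KW kappa /\ 0 < (c - a) ^ 2.
Proof.
  intros hca hw hk s.
  assert (hd : 0 < (c - a) ^ 2).
  { simpl. rewrite Rmult_1_r. destruct (Rdichotomy _ _ hca).
    - assert (0 < a - c) by lra. replace ((c-a)*(c-a)) with ((a-c)*(a-c)) by ring.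
      apply Rmult_lt_0_compat; lra.
    - assert (0 < c - a) by lra. apply Rmult_lt_0_compat; lra. }
  assert (hp : 0 < 4 * (c - a) ^ 2 * KW * kappa).
  { apply Rmult_lt_0_compat; [apply Rmult_lt_0_compat; [apply Rmult_lt_0_compat|]|]; lra. }
  assert (0 <= hh a c KW kappa ^ 2 + 4 * (c - a) ^ 2 * KW * kappa) by nra.
  pose proof (sqrt_pos (hh a c KW kappa ^ 2 + 4 * (c - a) ^ 2 * KW * kappa)).
  pose proof (sqrt_sqrt _ H). fold s in H0, H1.
  split; [lra|]. split; [lra|]. split; [|split; [|lra]]; nra.
Qed.

Lemma Kinf_props (a c KW kappa : R) : c <> a -> 0 < KW -> 0 < kappa ->
  0 < Kinf a c KW kappa /\
  (c - a) ^ 2 * Kinf a c KW kappa ^ 2 + hh a c KW kappa * Kinf a c KW kappa - KW * kappa = 0 /\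
  (forall K, 0 <= K -> (c - a) ^ 2 * K ^ 2 + hh a c KW kappa * K - KW * kappa = 0 ->
     K = Kinf a c KW kappa).
Proof.
  intros hca hw hk.
  destruct (sqrt_facts a c KW kappa hca hw hk) as (h0 & h1 & h2 & h3 & hd).
  unfold Kinf. set (s := sqrt _) in *. set (h := hh a c KW kappa) in *.
  set (d2 := (c - a) ^ 2) in *.
  split; [|split].
  - apply Rdiv_lt_0_compat; lra.
  - field_simplify; [|lra]. unfold Rdiv. 
    replace (s ^ 2) with (s * s) by ring. rewrite h1. field. lra.
  - intros K hK hq.
    set (K0 := (- h + s) / (2 * d2)).
    assert (hK0 : d2 * K0 ^ 2 + h * K0 - KW * kappa = 0).
    { unfold K0. field_simplify; [|lra].
      replace (s ^ 2) with (s * s) by ring. rewrite h1. field. lra. }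
    assert (hK0p : 0 < K0) by (apply Rdiv_lt_0_compat; lra).
    assert (e : (K - K0) * (d2 * (K + K0) + h) = 0) by nra.
    apply Rmult_integral in e. destruct e as [e|e]; [lra|].
    exfalso.
    assert (d2 * K0 * 2 = - h + s) by (unfold K0; field; lra).
    nra.
Qed.

Theorem theorem5 (a c KW kappa : R) (hca : c <> a) (hKW : 0 < KW) (hkappa : 0 < kappa) :
  detectable (matA c) (matC 0 c a)
  /\ stabilizable (matAstar 0 c a kappa KW) (matBstar_half kappa KW)
  /\ 0 <= Kinf a c KW kappa
  /\ Kinf a c KW kappa = riccati a c KW kappa (Kinf a c KW kappa)
  /\ stabilizing a c KW kappa (Kinf a c KW kappa)
  /\ (forall K : R, 0 <= K -> K = riccati a c KW kappa K ->
        stabilizing a c KW kappa K -> K = Kinf a c KW kappa)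
  /\ is_lim_seq (rate_n a c KW kappa) (C_LB_nfb a c KW kappa).
Proof.
  destruct (Kinf_props a c KW kappa hca hKW hkappa) as (hKp & hKq & hKu).
  set (Ki := Kinf a c KW kappa) in *.
  set (f := riccati a c KW kappa).
  assert (hca' : c - a <> 0) by lra.
  assert (hfix : Ki = f Ki).
  { pose proof (f_quad a c KW kappa Ki hKW hkappa (Rlt_le _ _ hKp)).
    pose proof (den_pos a c KW kappa Ki hKW hkappa (Rlt_le _ _ hKp)).
    fold f in H. rewrite hKq in H.
    assert (f Ki - Ki = 0).
    { apply (Rmult_eq_reg_r (kappa + KW + (c - a) ^ 2 * Ki)); lra. }
    lra. }
  split; [|split; [|split; [|split; [|split; [|split]]]]].
  - exists (c / (c - a)). unfold matA, matC.
    replace (c - c / (c - a) * (0 + c - a)) with 0 by (field; auto).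
    rewrite Rabs_R0; lra.
  - unfold matBstar_half, matAstar, matB, matR.
    assert (0 < 1 - KW * / (kappa + KW)).
    { replace (1 - KW * / (kappa + KW)) with (kappa / (kappa + KW)) by (field; lra).
      apply Rdiv_lt_0_compat; lra. }
    assert (0 < sqrt KW * sqrt (1 - KW * / (kappa + KW))).
    { apply Rmult_lt_0_compat; apply sqrt_lt_R0; auto. }
    set (B := sqrt KW * sqrt (1 - KW * / (kappa + KW))) in *.
    set (A := c - KW * / (kappa + KW) * (0 + c - a)).
    exists (A / B).
    unfold matC. change (Rabs (A - B * (A / B)) < 1).
    replace (A - B * (A / B)) with 0 by (field; lra).
    rewrite Rabs_R0; lra.
  - lra.
  - exact hfix.
  - unfold stabilizing.
    pose proof (f_fix_g a c KW kappa Ki hKW hkappa (Rlt_le _ _ hKp)) as hg.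
    fold f in hg. rewrite <- hfix in hg. unfold gfun in hg.
    set (M := gainM a c KW kappa Ki) in *.
    set (F := c - M * (c - a)) in *.
    assert (0 < M ^ 2 * kappa + (1 - M) ^ 2 * KW).
    { pose proof (pow2_ge_0 M); pose proof (pow2_ge_0 (1 - M)).
      assert (0 <= M ^ 2 * kappa) by (apply Rmult_le_pos; lra).
      assert (0 <= (1 - M) ^ 2 * KW) by (apply Rmult_le_pos; lra).
      destruct (Req_dec M 0) as [e|e].
      - rewrite e. simpl. lra.
      - assert (0 < M ^ 2) by (simpl; rewrite Rmult_1_r; destruct (Rdichotomy _ _ e); nra).
        assert (0 < M ^ 2 * kappa) by (apply Rmult_lt_0_compat; lra). lra. }
    assert (F ^ 2 < 1).
    { apply (Rmult_lt_reg_r Ki); auto. rewrite Rmult_1_l. lra. }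
    unfold Rabs; destruct (Rcase_abs F); nra.
  - intros K hK hKf _. apply hKu; auto.
    pose proof (f_quad a c KW kappa K hKW hkappa hK).
    pose proof (den_pos a c KW kappa K hKW hkappa hK).
    fold f in H. rewrite <- hKf in H. rewrite Rminus_diag, Rmult_0_l in H. lra.
  -
    set (u := Ko a c KW kappa).
    assert (hu : forall n, 0 <= u n /\ u n <= Ki /\ u n <= u (S n)).
    { induction n.
      - change (0 <= 0 /\ 0 <= Ki /\ 0 <= f 0). split; [lra|split; [lra|]].
        apply f_nonneg; lra.
      - destruct IHn as (h0 & h1 & h2).
        assert (0 <= u (S n)) by (change (0 <= f (u n)); apply f_nonneg; auto).
        split; [auto|split].
        + change (f (u n) <= Ki). rewrite hfix. apply f_mono; auto.
        + change (f (u n) <= f (u (S n))). apply f_mono; auto. }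
    destruct (growing_cv u) as [l hl].
    { intros n. apply hu. }
    { exists Ki. intros x [n ->]. apply hu. }
    apply is_lim_seq_Reals in hl.
    assert (hl0 : 0 <= l).
    { assert (H := is_lim_seq_le (fun _ => 0) u 0 l (fun n => proj1 (hu n))
        (is_lim_seq_const 0) hl). simpl in H. auto. }
    assert (hcont : continuity_pt f l).
    { apply continuity_pt_filterlim. apply (@ex_derive_continuous R_AbsRing R_NormedModule).
      pose proof (den_pos a c KW kappa l hKW hkappa hl0).
      unfold f, riccati. auto_derive. lra. }
    assert (hlf : l = f l).
    { pose proof (is_lim_seq_continuous f u l hcont hl).
      apply is_lim_seq_incr_1 in hl.
      assert (Finite l = Finite (f l)).
      { rewrite <- (is_lim_seq_unique _ _ hl). apply is_lim_seq_unique.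
        apply H. }
      congruence. }
    assert (hlK : l = Ki).
    { apply hKu; auto.
      pose proof (f_quad a c KW kappa l hKW hkappa hl0).
      pose proof (den_pos a c KW kappa l hKW hkappa hl0).
      fold f in H. rewrite <- hlf in H. nra. }
    subst l.
    set (phi := fun K => ln (((c - a) ^ 2 * K + kappa + KW) / KW)).
    assert (hphi : continuity_pt phi Ki).
    { apply continuity_pt_filterlim. apply (@ex_derive_continuous R_AbsRing R_NormedModule).
      pose proof (den_pos a c KW kappa Ki hKW hkappa (Rlt_le _ _ hKp)).
      unfold phi. auto_derive. apply Rmult_lt_0_compat; [|apply Rinv_0_lt_compat; lra].
      replace ((c - a) * ((c - a) * 1)) with ((c-a)^2) by ring; lra. }
    pose proof (is_lim_seq_continuous phi u Ki hphi hl) as hv.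
    apply is_lim_seq_Reals in hv.
    pose proof (Cesaro_1 _ _ hv) as hc.
    apply is_lim_seq_Reals in hc.
    apply (is_lim_seq_scal_l _ (/2)) in hc.
    unfold C_LB_nfb. fold phi. 
    eapply is_lim_seq_ext_loc; [|exact hc]. exists 1%nat. intros n hn.
      unfold rate_n.
      assert (hs : forall m, sumlt (fun i => phi (u i)) (S m) = sum_f_R0 (fun i => phi (u i)) m).
      { induction m; simpl; [ring|]. simpl in IHm. rewrite <- IHm. reflexivity. }
      destruct n as [|m]; [lia|].
      change (fun i : nat => ln (((c - a) ^ 2 * Ko a c KW kappa i + kappa + KW) / KW))
        with (fun i => phi (u i)).
      rewrite hs. simpl pred.
      assert (0 < INR (S m)) by (apply lt_0_INR; lia).
      field. lra.
Qed.
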